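(* Let $d=(L,Z)$ be a pure Euler diagram such that for each missing zone $z\in M(d)$ there is a contour $\ell\in L$ with $\mathrm{adj}(z,\ell)\in M(d)$, and let $L'=\{c\in L\mid M(d\setminus c)\neq\emptyset\}$. Then for every Heyting algebra and every valuation $v$, $\bigwedge_{c\in L'}[\![d\setminus c]\!]_v=[\![d]\!]_v$.
   Context: Fix a countably infinite set $\mathcal V$ of propositional variables. A Heyting algebra $(H,\vee,\wedge,\to,0,1)$ is a bounded distributive lattice with a binary operation $\to$ such that $c\wedge a\le b\iff c\le a\to b$; empty meets are $1$, empty joins are $0$. A valuation is a map $v:\mathcal V\to H$. For a finite $L\subset\mathcal V$, a zone over $L$ is a pair $z=(\mathrm{in}(z),\mathrm{out}(z))$ of disjoint subsets of $L$ with union $L$; $\mathcal Z(L)$ is the set of all zones over $L$. Missing-zone semantics: $m_v(z)=\big(\bigwedge_{c\in\mathrm{in}(z)}v(c)\big)\to\big(\bigvee_{c\in\mathrm{out}(z)}v(c)\big)$. A pure Euler diagram is $d=(L,Z)$ with $Z\subseteq\mathcal Z(L)$; its missing zones are $M(d)=\mathcal Z(L)\setminus Z$ and $[\![d]\!]_v=\bigwedge_{z\in M(d)}m_v(z)$. For $c\in L$, $\mathrm{adj}(z,c)$ is the zone obtained from $z$ by moving $c$ from $\mathrm{out}(z)$ to $\mathrm{in}(z)$ or from $\mathrm{in}(z)$ to $\mathrm{out}(z)$. Reduction: $z\setminus c=(\mathrm{in}(z)\setminus\{c\},\mathrm{out}(z)\setminus\{c\})$ and $d\setminus c=(L\setminus\{c\},\{z\setminus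 c: z\in Z\})$, a pure Euler diagram over $L\setminus\{c\}$. *)

(* Defs.v *)
From HB Require Import structures.
From mathcomp Require Import all_boot all_order.
From mathcomp Require Import finmap.

Set Implicit Arguments.
Unset Strict Implicit.
Unset Printing Implicit Defensive.

Local Open Scope fset_scope.

Definition var := nat.

(* Heyting algebra: a bounded distributive lattice (MathComp's
   tbDistrLatticeType) with an operation imp satisfying the adjunction
   c /\ a <= b  <->  c <= a -> b. *)
Definition heyting_imp (disp : Order.disp_t) (H : tbDistrLatticeType disp)
  (imp : H -> H -> H) : Prop :=
  forall a b c : H, (Order.meet c a <= b)%O = (c <= imp a b)%O.

Definition zone := ({fset var} * {fset var})%type.
Definition zin (z : zone) := z.1.
Definition zout (z : zone) := z.2.

Definition zones (L : {fset var}) : {fset zone} :=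
  [fset ((A, L `\` A) : zone) | A in fpowerset L].

Definition diagram := ({fset var} * {fset zone})%type.
Definition dlab (d : diagram) := d.1.
Definition dzones (d : diagram) := d.2.
Definition is_diagram (d : diagram) : bool := dzones d `<=` zones (dlab d).

Definition missing (d : diagram) : {fset zone} := zones (dlab d) `\` dzones d.

Definition adj (z : zone) (c : var) : zone :=
  if c \in zin z then (zin z `\ c, c |` zout z) else (c |` zin z, zout z `\ c).

Definition reduce_zone (z : zone) (c : var) : zone := (zin z `\ c, zout z `\ c).
Definition reduce (d : diagram) (c : var) : diagram :=
  (dlab d `\ c, [fset reduce_zone z c | z in dzones d]).

Definition mzone (disp : Order.disp_t) (H : tbDistrLatticeType disp)
  (imp : H -> H -> H) (v : var -> H) (z : zone) : H :=
  imp (\big[Order.meet/Order.top]_(c <- zin z) v c)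
      (\big[Order.join/Order.bottom]_(c <- zout z) v c).

Definition sem (disp : Order.disp_t) (H : tbDistrLatticeType disp)
  (imp : H -> H -> H) (v : var -> H) (d : diagram) : H :=
  \big[Order.meet/Order.top]_(z <- missing d) mzone imp v z.

(* Main.v *)
Require Import Defs.
From HB Require Import structures.
From mathcomp Require Import all_boot all_order.
From mathcomp Require Import finmap.
Local Open Scope fset_scope.
Import Order.LTheory.

Lemma zonesP L (z : zone) :
  reflect (zin z `<=` L /\ zout z = L `\` zin z) (z \in zones L).
Proof.
case: z => A B /=; rewrite /zones /zin /zout /=.
apply: (iffP idP) => [/imfsetP [X] /= | [sAL ->]].
  by rewrite fpowersetE => sXL [-> ->].
by apply/imfsetP; exists A => //=; rewrite fpowersetE.
Qed.

Lemma memL' (d : diagram) c : (c \in [fset c | c in dlab d & missing (reduce d c) != fset0]) = (c \in dlab d) && (missing (reduce d c) != fset0).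
Proof. by rewrite !inE. Qed.
Section H.
Variables (disp : Order.disp_t) (H : tbDistrLatticeType disp)
  (imp : H -> H -> H) (Himp : heyting_imp imp).

Lemma imp_le a b a' b' : (a' <= a)%O -> (b <= b')%O -> (imp a b <= imp a' b')%O.
Proof.
move=> ha hb; rewrite -Himp.
have : (Order.meet (imp a b) a <= b)%O by rewrite Himp.
move=> h; apply: le_trans hb; apply: le_trans h.
by rewrite lexI leIl /= leIx2 // ha orbT.
Qed.

Lemma key x c I O : (x <= imp (Order.meet c I) O)%O -> (x <= imp I (Order.join c O))%O ->
  (x <= imp I O)%O.
Proof.
rewrite -!Himp => h1 h2.
have -> : Order.meet x I = Order.meet (Order.meet x I) (Order.join c O).
  by rewrite (meet_idPl h2).
rewrite meetUr leUx leIr andbT.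
by rewrite -meetA [Order.meet I c]meetC.
Qed.

Lemma mzone_le (v : var -> H) (z : zone) a b :
  (forall x, x \in zin z -> a <= v x)%O ->
  (forall x, x \in zout z -> v x <= b)%O ->
  (mzone imp v z <= imp a b)%O.
Proof.
move=> ha hb; apply: imp_le.
  by apply/meetsP_seq => x xin _; exact: ha.
by apply/joinsP_seq => x xin _; exact: hb.
Qed.
End H.

Theorem lemma5 (disp : Order.disp_t) (H : tbDistrLatticeType disp)
  (imp : H -> H -> H) (Himp : heyting_imp imp)
  (d : diagram) (Hd : is_diagram d)
  (Hadj : forall z, z \in missing d ->
            exists2 l, l \in dlab d & adj z l \in missing d)
  (v : var -> H) :
  \big[Order.meet/Order.top]_(c <- [fset c | c in dlab d & missing (reduce d c) != fset0])
     sem imp v (reduce d c)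
  = sem imp v d.
Proof.
case: d Hd Hadj => L Z Hd Hadj.
rewrite /is_diagram /dlab /dzones /= in Hd Hadj *.
have missP (dd : diagram) z : z \in missing dd = (z \in zones (dlab dd)) && (z \notin dzones dd).
  by rewrite /missing !inE andbC.
apply/le_anti/andP; split.
- apply/meetsP_seq => z zm _.
  have [l lL adjm] := Hadj z zm.
  move: zm; rewrite missP => /andP [/zonesP [sAL eB] znZ].
  have z'm : reduce_zone z l \in missing (reduce (L, Z) l).
    rewrite missP /reduce /dlab /dzones /=; apply/andP; split.
      apply/zonesP; rewrite /reduce_zone /zin /zout /=; rewrite /zin /zout in sAL eB; rewrite eB; split.
        apply/fsubsetP => x; rewrite !inE => /andP [-> /=]; exact: (fsubsetP sAL).
      apply/fsetP => x; rewrite !inE; by case: (x == l); case: (x \in zin z).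
    apply/imfsetP => -[w /= wZ] eq.
    have /zonesP [sBL eBw] := fsubsetP Hd w wZ.
    case: z eq sAL eB znZ adjm => A B /=; case: w wZ sBL eBw => A' B' /=.
    rewrite /reduce_zone /zin /zout /= => wZ sBL eBw [eA _] sAL -> znZ adjm; rewrite eBw in wZ.
    have ptw x : x != l -> (x \in A) = (x \in A').
      by move=> xl; move/fsetP: eA => /(_ x); rewrite !inE xl.
    case: (boolP ((l \in A) == (l \in A'))) => [/eqP el | nel].
      have eAA : A = A'.
        apply/fsetP => x; case: (eqVneq x l) => [-> // | xl]; exact: ptw.
      by move: znZ; rewrite eAA wZ.
    move: adjm; rewrite missP /adj /zin /zout /= => /andP [_].
    have -> : (if l \in A then (A `\ l, l |` L `\` A) else (l |` A, L `\` A `\ l)) = (A', L `\` A').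
      case lA: (l \in A) nel; case lA': (l \in A') => // _; congr pair;
       apply/fsetP => x; rewrite !inE; case: (eqVneq x l) => [-> | xl] /=;
       rewrite ?lA ?lA' ?lL ?(ptw x xl) //.
    by rewrite wZ.
  apply: (@le_trans _ _ (sem imp v (reduce (L, Z) l))).
    apply: meets_inf_seq => //; rewrite memL' lL /=.
    by apply/fset0Pn; exists (reduce_zone z l).
  apply: le_trans; first exact: (meets_inf_seq _ z'm).
  rewrite /=.
  rewrite {2}/mzone; apply: (@mzone_le _ _ _ Himp) => x.
    by rewrite /reduce_zone /zin /= !inE => /andP [_ xz]; exact: meets_inf_seq.
  by rewrite /reduce_zone /zout /= !inE => /andP [_ xz]; exact: joins_sup_seq.
- apply/meetsP_seq => c; rewrite memL' => /andP [cL _] _.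
  apply/meetsP_seq => z' z'm _.
  move: z'm; rewrite missP /reduce /dlab /dzones /= => /andP [/zonesP [sA'L eB'] z'nZ].
  pose A' := zin z'.
  have cA' : c \notin A'.
    by apply/negP => /(fsubsetP sA'L); rewrite !inE eqxx.
  pose z1 : zone := (c |` A', L `\` (c |` A')).
  pose z2 : zone := (A', L `\` A').
  have red1 : reduce_zone z1 c = z'.
    case: z' @A' sA'L eB' z'nZ cA' @z1 @z2 => a b /= sA'L eB' _ cA'.
    rewrite /reduce_zone /zin /zout /= in eB' *; rewrite eB'.
    congr pair; apply/fsetP => x; rewrite !inE; case: (eqVneq x c) => [-> | xc] //=; by rewrite ?(negbTE cA') ?andbF.
  have red2 : reduce_zone z2 c = z'.
    case: z' @A' sA'L eB' z'nZ cA' @z1 @z2 red1 => a b /= sA'L eB' _ cA' _.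
    rewrite /reduce_zone /zin /zout /= in eB' *; rewrite eB'.
    congr pair; apply/fsetP => x; rewrite !inE; case: (eqVneq x c) => [-> | xc] //=; by rewrite ?(negbTE cA') ?andbF.
  have inm zz : reduce_zone zz c = z' -> zz \in zones L -> zz \in missing (L, Z).
    move=> rz zzL; rewrite missP zzL /=; apply/negP => zzZ.
    by move: z'nZ; rewrite -rz; apply/negP/negPn/imfsetP; exists zz.
  have z1m : z1 \in missing (L, Z).
    apply: inm red1 _; apply/zonesP; split => //=.
    apply/fsubsetP => x; rewrite !inE => /orP [/eqP -> // | /(fsubsetP sA'L)].
    by rewrite !inE => /andP [_ ->].
  have z2m : z2 \in missing (L, Z).
    apply: inm red2 _; apply/zonesP; split => //=.
    apply/fsubsetP => x /(fsubsetP sA'L); by rewrite !inE => /andP [_ ->].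
  have h1 : (sem imp v (L, Z) <= mzone imp v z1)%O by exact: meets_inf_seq.
  have h2 : (sem imp v (L, Z) <= mzone imp v z2)%O by exact: meets_inf_seq.
  apply: (@key _ _ _ Himp _ (v c)).
    apply: le_trans h1 _; apply: (@mzone_le _ _ _ Himp) => x.
      rewrite /z1 /zin /= !inE => /orP [/eqP -> | xA]; first exact: leIl.
      by apply: le_trans (leIr _ _) _; exact: meets_inf_seq.
    rewrite /z1 /zout /= !inE negb_or => /andP [/andP [xc xA] xL].
    by apply: joins_sup_seq => //; rewrite -/(zout z') eB' !inE -/A' xc (negbTE xA) xL.
  apply: (le_trans h2); apply: (@mzone_le _ _ _ Himp) => x.
    by rewrite /z2 /zin /= => xA; exact: meets_inf_seq.
  rewrite /z2 /zout /= !inE => /andP [xA xL].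
  case: (eqVneq x c) => [-> | xc]; first exact: leUl.
  apply: le_trans (leUr _ _); apply: joins_sup_seq => //.
  by rewrite -/(zout z') eB' !inE -/A' xc (negbTE xA) xL.
Qed.
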